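(* Let $p\ge 2$, let $\mathcal{N}$ be a finite nonempty index set, let $\{\hat{\bm{\Sigma}}(t_i)\}_{i\in\mathcal{N}}$ be $p\times p$ symmetric positive semidefinite matrices with entries $\hat{\Sigma}_{uv}(t_i)$, and let $\lambda>0$. For a tuple $\mathbb{\Omega}=\{\bm{\Omega}(t_i)\}_{i\in\mathcal{N}}$ of $p\times p$ symmetric positive definite matrices define $$L(\mathbb{\Omega})=\frac{1}{\sqrt{|\mathcal{N}|}}\sum_{i\in\mathcal{N}}\Big[\operatorname{tr}\big(\bm{\Omega}(t_i)\hat{\bm{\Sigma}}(t_i)\big)-\log\det\bm{\Omega}(t_i)\Big]+\lambda\sum_{u\neq v}\sqrt{\sum_{i\in\mathcal{N}}\Omega_{uv}(t_i)^2},$$ and let $\{\hat{\bm{\Omega}}(t_i)\}_{i\in\mathcal{N}}$ be its minimizer over tuples of positive definite matrices. Let $\{G_1,G_2\}$ be a partition of $\{1,\dots,p\}$ into two disjoint sets. Then the variables in $G_1$ are completely disconnected from those in $G_2$ in all estimated precision matrices, i.e. $\hat{\Omega}_{uv}(t_i)=0$ for all $u\in G_1$, $v\in G_2$, $i\in\mathcal{N}$, if and only if $$\frac{1}{|\mathcal{N}|}\sum_{i\in\mathcal{N}}\hat{\Sigma}_{uv}(t_i)^2\le\lambda^2\qquad\text{for all } u\in G_1,\ v\in G_2.$$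
   Context: In the paper, $\mathcal{N}=\mathcal{N}_{k,d}=\{i:|t_i-t_k|\le d\}$ is the set of indices of observation times $0\le t_1\le\dots\le t_N\le 1$ within distance $d$ of $t_k$, and $\hat{\bm{\Sigma}}(t)=\sum_{j=1}^N \omega_h^{t_j}(t)\bm{x}_j\bm{x}_j^T$ is a kernel estimate of the covariance matrix, with weights $\omega_h^{t_j}(t)=K((t_j-t)/h)/\sum_{j'}K((t_{j'}-t)/h)$ for a symmetric nonnegative kernel $K$ and bandwidth $h>0$, based on observations $\bm{x}_j\in\mathbb{R}^p$. The objective $L$ is strictly convex, so its minimizer, when it exists, is unique. *)

(* Defs.v *)
From HB Require Import structures.
From mathcomp Require Import all_boot all_order all_algebra.
From mathcomp Require Import all_classical all_reals all_analysis.
Set Implicit Arguments. Unset Strict Implicit. Unset Printing Implicit Defensive.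
Import Order.TTheory GRing.Theory Num.Theory.
Local Open Scope ring_scope.

Definition psd_mx (R : realType) (p : nat) (A : 'M[R]_p) : Prop :=
  A^T = A /\ forall x : 'cV[R]_p, 0 <= (x^T *m A *m x) 0 0.

Definition pd_mx (R : realType) (p : nat) (A : 'M[R]_p) : Prop :=
  A^T = A /\ forall x : 'cV[R]_p, x != 0 -> 0 < (x^T *m A *m x) 0 0.

Definition objL (R : realType) (p : nat) (I : finType)
    (Sig : I -> 'M[R]_p) (lambda : R) (Om : I -> 'M[R]_p) : R :=
  (Num.sqrt (#|I|%:R))^-1 *
    (\sum_(i : I) (\tr (Om i *m Sig i) - ln (\det (Om i))))
  + lambda * \sum_(u < p) \sum_(v < p | u != v)
       Num.sqrt (\sum_(i : I) (Om i u v) ^+ 2).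

Definition is_minimizer (R : realType) (p : nat) (I : finType)
    (Sig : I -> 'M[R]_p) (lambda : R) (Omhat : I -> 'M[R]_p) : Prop :=
  (forall i, pd_mx (Omhat i)) /\
  forall Om : I -> 'M[R]_p, (forall i, pd_mx (Om i)) ->
    objL Sig lambda Omhat <= objL Sig lambda Om.

(* Main.v *)
Require Import Defs.
From HB Require Import structures.
From mathcomp Require Import all_boot all_order all_algebra.
From mathcomp Require Import all_classical all_reals all_analysis.
From mathcomp Require Import complex.
From mathcomp Require Import ring lra.
Import Order.TTheory GRing.Theory Num.Theory.
Local Open Scope ring_scope.


Section Lin.
Variable R : realType.
Local Notation ii := (real_complex R).

Lemma pd_form_ge0 n (A : 'M[R]_n) : pd_mx A -> forall x : 'cV_n, 0 <= (x^T *m A *m x) 0 0.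
Proof.
move=> [_ pA] x; have [->|x0] := eqVneq x 0; last exact/ltW/pA.
by rewrite mulmx0 mxE.
Qed.

Lemma pd_unit n (A : 'M[R]_n) : pd_mx A -> A \in unitmx.
Proof.
move=> [_ pA]; rewrite unitmxE unitfE; apply/negP => /det0P [v v0 vA].
have := pA v^T; rewrite trmx_eq0 v0 trmxK vA mul0mx mxE => /(_ isT).
by rewrite ltxx.
Qed.

Lemma cform n (M : 'M[R]_n) (x y : 'rV[R]_n) : M^T = M ->
  ((map_mx ii x + 'i%C *: map_mx ii y) *m map_mx ii M *m
     (map_mx ii x^T - 'i%C *: map_mx ii y^T)) 0 0 =
  ii ((x *m M *m x^T) 0 0 + (y *m M *m y^T) 0 0).
Proof.
move=> MT.
have sym : (y *m M *m x^T) 0 0 = (x *m M *m y^T) 0 0.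
  have e : (y *m M *m x^T) 0 0 = ((y *m M *m x^T)^T) 0 0 by rewrite [RHS]mxE.
  by rewrite e !trmx_mul trmxK MT mulmxA.
rewrite !mulmxDl !mulmxBr -!scalemxAl -!scalemxAr -!map_mxM.
rewrite -[LHS]/(_ 0 0) -[RHS]/(ii ((x *m M *m x^T) 0 0 + (y *m M *m y^T) 0 0)).
move: sym; move: (x *m M *m x^T) (y *m M *m x^T) (x *m M *m y^T) (y *m M *m y^T) => a b c d sym.
rewrite !mxE sym rmorphD /=.
have i2 : 'i%C * 'i%C = -1 :> R[i] by rewrite -expr2 sqr_i.
rewrite !mulrA i2; ring.
Qed.

Lemma eig_pos n (A B : 'M[R]_n) : pd_mx A -> pd_mx B ->
  forall z : R[i], eigenvalue (map_mx ii (B *m invmx A)) z ->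
  0 < complex.Re z /\ z = ii (complex.Re z).
Proof.
move=> pdA pdB z /eigenvalueP [v vz vN].
set x := map_mx (@complex.Re R) v; set y := map_mx (@complex.Im R) v.
have ev : v = map_mx ii x + 'i%C *: map_mx ii y.
  by apply/matrixP => i j; rewrite !mxE [LHS]complexE mulrC.
have e1 : v *m map_mx ii B = z *: (v *m map_mx ii A).
  have : v *m map_mx ii (B *m invmx A) *m map_mx ii A = z *: v *m map_mx ii A by rewrite vz.
  rewrite map_mxM -!mulmxA -[map_mx ii (invmx A) *m _]map_mxM mulVmx ?pd_unit // map_mx1 mulmx1 => ->.
  by rewrite scalemxAl.
set w := map_mx ii x^T - 'i%C *: map_mx ii y^T.
have e2 : (v *m map_mx ii B *m w) 0 0 = z * (v *m map_mx ii A *m w) 0 0.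
  by rewrite e1 -scalemxAl mxE.
move: e2; rewrite ev !cform; try by case: pdA; try by case: pdB.
set al := _ + _; set be := _ + _ => e2.
have qpos (M : 'M[R]_n) : pd_mx M -> 0 < (x *m M *m x^T) 0 0 + (y *m M *m y^T) 0 0.
  move=> pdM.
  have hx := pd_form_ge0 _ _ pdM x^T; have hy := pd_form_ge0 _ _ pdM y^T.
  rewrite !trmxK in hx hy.
  have [x0|xn0] := eqVneq x 0.
    have [y0|yn0] := eqVneq y 0.
      by move: vN; rewrite ev x0 y0 map_mx0 scaler0 addr0 eqxx.
    have := pdM.2 y^T; rewrite trmx_eq0 yn0 trmxK => /(_ isT) hy'.
    lra.
  have := pdM.2 x^T; rewrite trmx_eq0 xn0 trmxK => /(_ isT) hx'.
  lra.
have alp : 0 < al by apply: qpos.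
have bep : 0 < be by apply: qpos.
have ez : z = ii (al / be).
  rewrite rmorphM /= fmorphV /= e2 -mulrA mulfV ?mulr1 //.
  by rewrite (inj_eq (@complexI R)) gt_eqF.
by rewrite ez /=; split => //; rewrite divr_gt0.
Qed.

Lemma charpoly_roots n (A B : 'M[R]_n) : pd_mx A -> pd_mx B ->
  exists s : seq R, [/\ all (fun x => 0 < x) s, size s = n &
    char_poly (B *m invmx A) = \prod_(x <- s) ('X - x%:P)].
Proof.
move=> pdA pdB; set N := B *m invmx A.
have [sC HC] := closed_field_poly_normal (char_poly (map_mx ii N)).
rewrite (monicP (char_poly_monic _)) scale1r in HC.
have hz z : z \in sC -> 0 < complex.Re z /\ z = ii (complex.Re z).
  move=> zs; apply: (eig_pos _ _ _ pdA pdB).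
  by rewrite eigenvalue_root_char HC root_prod_XsubC.
exists (map (@complex.Re R) sC); split.
- by apply/allP => x /mapP [z zs ->]; case: (hz z zs).
- rewrite size_map; have := size_char_poly (map_mx ii N).
  by rewrite HC size_prod_XsubC => -[].
- apply: (@map_poly_inj _ _ ii).
  rewrite map_char_poly HC rmorph_prod big_map.
  apply: eq_big_seq => z zs; rewrite rmorphB /= map_polyX map_polyC /=.
  by case: (hz z zs) => _ <-.
Qed.

Lemma horner_char n (N : 'M[R]_n) a : (char_poly N).[a] = \det (a%:M - N).
Proof.
rewrite /char_poly -horner_evalE -det_map_mx; congr (\det _).
apply/matrixP => i j; rewrite /char_poly_mx !mxE /= horner_evalE.
by case: eqP => _; rewrite !hornerE.
Qed.

Lemma prodN_seq (s : seq R) (f : R -> R) :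
  \prod_(x <- s) (- f x) = (-1) ^+ size s * \prod_(x <- s) f x.
Proof.
elim: s => [|x s IH]; first by rewrite !big_nil expr0 mulr1.
by rewrite !big_cons IH exprS /=; ring.
Qed.

Lemma detDN n (N : 'M[R]_n) (s : seq R) : size s = n ->
  char_poly N = \prod_(x <- s) ('X - x%:P) ->
  forall a, \det (a%:M + N) = \prod_(x <- s) (a + x).
Proof.
move=> sz hc a.
have := horner_char _ N (- a); rewrite hc horner_prod.
have -> : (- a)%:M - N = - (a%:M + N) by rewrite opprD raddfN.
rewrite -(scaleN1r (a%:M + N)) detZ.
under eq_bigr do rewrite hornerXsubC -opprD.
rewrite prodN_seq sz => /(congr1 (fun t => (-1) ^+ n * t)).
by rewrite !signrMK => ->.
Qed.

Lemma det_pd_pos n (A : 'M[R]_n) : pd_mx A -> 0 < \det A.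
Proof.
move=> pdA.
have pd1 : pd_mx (1%:M : 'M[R]_n).
  split; first by rewrite trmx1.
  move=> x x0; rewrite mulmx1 mxE.
  have [k xk] : exists k, x k 0 != 0.
    apply/existsP; apply: contraNT x0; rewrite negb_exists => /forallP h.
    by apply/eqP/matrixP => i j; rewrite (ord1 j) mxE; apply/eqP; move: (h i); rewrite negbK.
  under eq_bigr do rewrite mxE -expr2.
  rewrite (bigD1 k) //=.
  have h1 : 0 < x k 0 ^+ 2 by rewrite lt_def sqr_ge0 andbT sqrf_eq0.
  have h2 : 0 <= \sum_(i | i != k) x i 0 ^+ 2 by apply: sumr_ge0 => i _; apply: sqr_ge0.
  lra.
have [s [ps sz hc]] := charpoly_roots _ _ _ pd1 pdA.
rewrite invmx1 mulmx1 in hc.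
have := detDN _ _ _ sz hc 0; rewrite raddf0 add0r => ->.
rewrite big_seq prodr_gt0 // => x xs; rewrite add0r; exact: (allP ps).
Qed.

Lemma prodZ_seq (s : seq R) (c : R) (f : R -> R) :
  \prod_(x <- s) (c * f x) = c ^+ size s * \prod_(x <- s) f x.
Proof.
elim: s => [|x s IH]; first by rewrite !big_nil expr0 mulr1.
by rewrite !big_cons IH exprS /=; ring.
Qed.

Lemma prodC_seq {S : pzRingType} {T : Type} (s : seq T) (c : S) :
  \prod_(x <- s) c = c ^+ size s.
Proof.
elim: s => [|x s IH]; first by rewrite !big_nil expr0.
by rewrite !big_cons IH exprS.
Qed.

Lemma prodX2_seq (s : seq R) (f : R -> R) :
  \prod_(x <- s) (f x ^+ 2) = (\prod_(x <- s) f x) ^+ 2.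
Proof.
elim: s => [|x s IH]; first by rewrite !big_nil expr1n.
by rewrite !big_cons IH exprMn.
Qed.

Lemma prod_pos_seq (s : seq R) (f : R -> R) :
  (forall x, x \in s -> 0 < f x) -> 0 < \prod_(x <- s) f x.
Proof. by move=> h; rewrite big_seq prodr_gt0. Qed.

Lemma amgm_seq (s : seq R) : all (fun x => 0 < x) s ->
  \prod_(x <- s) x <= \prod_(x <- s) (((1 + x) / 2) ^+ 2) /\
  (\prod_(x <- s) x = \prod_(x <- s) (((1 + x) / 2) ^+ 2) -> all (fun x => x == 1) s).
Proof.
elim: s => [|x s IH]; first by rewrite !big_nil.
rewrite /= => /andP [x0 ps]; have [hle heq] := IH ps.
rewrite !big_cons.
set P := \prod_(y <- s) y; set Q := \prod_(y <- s) _.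
have P0 : 0 < P by apply: prod_pos_seq => y ys; exact: (allP ps).
set b := ((1 + x) / 2) ^+ 2.
have bx : b - x = ((x - 1) / 2) ^+ 2 by rewrite /b; field.
have xb : x <= b by rewrite -subr_ge0 bx sqr_ge0.
have h1 : x * P <= x * Q by rewrite ler_pM2l.
have Q0 : 0 < Q by apply: lt_le_trans hle.
have h2 : x * Q <= b * Q by rewrite ler_pM2r.
split; first exact: le_trans h1 h2.
move=> e.
have e1 : x * P = x * Q by apply/le_anti; rewrite h1 /=; lra.
have e2 : x * Q = b * Q by lra.
have PQ : P = Q by apply: (mulfI (lt0r_neq0 x0)).
have xbe : x = b by apply: (mulIf (lt0r_neq0 Q0)).
rewrite heq // andbT; apply/eqP.
have : ((x - 1) / 2) ^+ 2 = 0 by rewrite -bx -xbe subrr.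
move=> /eqP; rewrite sqrf_eq0 mulf_eq0 invr_eq0 pnatr_eq0 orbF subr_eq0 => /eqP; done.
Qed.

Lemma pd_inv n (A : 'M[R]_n) : pd_mx A -> pd_mx (invmx A).
Proof.
move=> pdA; have uA := pd_unit _ _ pdA; case: pdA => AT pA.
have WT : (invmx A)^T = invmx A by rewrite trmx_inv AT.
split => // y y0; set z := invmx A *m y.
have z0 : z != 0.
  apply: contraNneq y0 => ez.
  by rewrite -[y]mul1mx -(mulmxV uA) -mulmxA -/z ez mulmx0.
have := pA z z0.
suff -> : z^T *m A *m z = y^T *m invmx A *m y by [].
rewrite /z trmx_mul WT -!mulmxA (mulmxA A) (mulmxV uA) mul1mx.
by rewrite !mulmxA.
Qed.

Lemma nil_row n (A C : 'M[R]_n) (x : 'rV[R]_n) : pd_mx A -> C^T = C ->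
  x *m (C *m invmx A) *m (C *m invmx A) = 0 -> x *m (C *m invmx A) = 0.
Proof.
move=> pdA CT h; have uA := pd_unit _ _ pdA.
have [WT pW] := pd_inv _ _ pdA; set W := invmx A in h WT pW *.
have h1 : x *m C *m W *m C = 0.
  have := congr1 (mulmx^~ A) h; rewrite mul0mx => <-.
  by rewrite !mulmxA -!mulmxA (mulVmx uA) mulmx1 !mulmxA.
have h2 : ((x *m C) *m W *m (x *m C)^T) 0 0 = 0.
  by rewrite trmx_mul CT !mulmxA h1 mul0mx mxE.
have : (x *m C)^T == 0.
  apply/negPn/negP => ne; have := pW _ ne; rewrite trmxK h2 ltxx.
  done.
by rewrite trmx_eq0 mulmxA => /eqP ->; rewrite mul0mx.
Qed.

Lemma nilp n (A C : 'M[R]_n.+1) m : pd_mx A -> C^T = C ->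
  (C *m invmx A) ^+ m = 0 -> C *m invmx A = 0.
Proof.
move=> pdA CT; set K := C *m invmx A.
elim: m => [|m IH] h.
  by rewrite -[K]mulr1 -(expr0 K) h mulr0.
case: m IH h => [|m] IH h; first by rewrite expr1 in h.
apply: IH; apply/row_matrixP => i; rewrite row0.
have := nil_row _ _ _ (row i (K ^+ m)) pdA CT.
rewrite -!row_mul !mulmxE -!exprSr h row0 => /(_ erefl).
done.
Qed.

Lemma det_mid n (A B : 'M[R]_n) : pd_mx A -> pd_mx B -> \det A = \det B ->
  \det A <= \det (2^-1 *: (A + B)) /\ (\det A = \det (2^-1 *: (A + B)) -> A = B).
Proof.
case: n A B => [|n] A B pdA pdB eAB.
  by rewrite !det_mx00; split => // _; apply/matrixP => i; case: i.
have uA := pd_unit _ _ pdA.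
have dA := det_pd_pos _ _ pdA.
have [s [ps sz hc]] := charpoly_roots _ _ _ pdA pdB.
set N := B *m invmx A in hc.
have NA : N *m A = B by rewrite /N -mulmxA (mulVmx uA) mulmx1.
have dN : \det N = 1.
  apply: (mulIf (lt0r_neq0 dA)); rewrite mul1r -det_mulmx NA; done.
have p1 : \prod_(x <- s) x = 1.
  have := detDN _ _ _ sz hc 0; rewrite raddf0 add0r dN => h; rewrite [RHS]h.
  by apply: eq_bigr => x _; rewrite add0r.
have eM : 2^-1 *: (A + B) = 2^-1 *: ((1%:M + N) *m A) by rewrite mulmxDl mul1mx NA.
set P := \prod_(x <- s) ((1 + x) / 2).
have eD : \det (2^-1 *: (A + B)) = P * \det A.
  rewrite eM detZ det_mulmx (detDN _ _ _ sz hc 1) mulrA; congr (_ * _).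
  by rewrite /P -sz -prodZ_seq; apply: eq_bigr => x _; rewrite mulrC.
have P0 : 0 < P by apply: prod_pos_seq => x xs; have := allP ps x xs; lra.
have [hle heq] := amgm_seq s ps.
rewrite p1 prodX2_seq -/P in hle heq.
have P1 : 1 <= P.
  move: hle; rewrite expr2 => hle; nra.
rewrite eD; split; first by nra.
move=> e.
have PE : P = 1 by apply: (mulIf (lt0r_neq0 dA)); rewrite mul1r -e.
have /allP s1 : all (fun x => x == 1) s by apply: heq; rewrite PE expr1n.
have CH := Cayley_Hamilton N.
rewrite hc rmorph_prod /= in CH.
have e1 : \prod_(x <- s) horner_mx N ('X - x%:P) = (N - 1%:M) ^+ size s.
  rewrite -prodC_seq; apply: eq_big_seq => x xs.
  by rewrite (eqP (s1 x xs)) rmorphB /= horner_mx_X horner_mx_C.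
rewrite e1 in CH.
have eK : N - 1%:M = (B - A) *m invmx A by rewrite mulmxBl (mulmxV uA).
have BAT : (B - A)^T = B - A by rewrite linearB /= pdA.1 pdB.1.
rewrite eK in CH.
have := nilp _ _ _ _ pdA BAT CH => /(congr1 (mulmx^~ A)).
rewrite -mulmxA (mulVmx uA) mulmx1 mul0mx => /eqP; rewrite subr_eq0 => /eqP.
done.
Qed.

End Lin.



Section Gen.
Variable R : realType.

Lemma quad_disc (A B C : R) : 0 <= C ->
  (forall t, 0 <= A + 2 * t * B + t ^+ 2 * C) -> B ^+ 2 <= A * C.
Proof.
move=> C0 h.
have A0 : 0 <= A by have := h 0; rewrite expr2 !(mulr0, mul0r, addr0).
have [C0'|Cp] := eqVneq C 0.
  have [B0|Bn] := eqVneq B 0; first by rewrite B0 expr0n /= C0' mulr0.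
  have := h (- (A + 1) / (2 * B)); rewrite C0' mulr0 addr0.
  have -> : 2 * (- (A + 1) / (2 * B)) * B = - (A + 1) by field.
  lra.
have Cpos : 0 < C by rewrite lt_def Cp C0.
have := h (- B / C).
have -> : A + 2 * (- B / C) * B + (- B / C) ^+ 2 * C = A - B ^+ 2 / C by field.
rewrite subr_ge0 ler_pdivrMr //.
Qed.

Lemma cs_sum (I : finType) (f g : I -> R) :
  (\sum_i f i * g i) ^+ 2 <= (\sum_i f i ^+ 2) * (\sum_i g i ^+ 2).
Proof.
apply: quad_disc; first by apply: sumr_ge0 => i _; apply: sqr_ge0.
move=> t.
have -> : \sum_i f i ^+ 2 + 2 * t * (\sum_i f i * g i) + t ^+ 2 * (\sum_i g i ^+ 2)
   = \sum_i (f i + t * g i) ^+ 2.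
  rewrite !mulr_sumr -!big_split /=; apply: eq_bigr => i _; ring.
by apply: sumr_ge0 => i _; apply: sqr_ge0.
Qed.

Lemma cs_sum_abs (I : finType) (f g : I -> R) :
  `|\sum_i f i * g i| <= Num.sqrt (\sum_i f i ^+ 2) * Num.sqrt (\sum_i g i ^+ 2).
Proof.
rewrite -sqrtrM; last by apply: sumr_ge0 => i _; apply: sqr_ge0.
by rewrite -sqrtr_sqr ler_wsqrtr // cs_sum.
Qed.

Lemma cs_form n (M : 'M[R]_n) (a x : 'cV[R]_n) : pd_mx M ->
  ((a^T *m M *m x) 0 0) ^+ 2 <= (a^T *m M *m a) 0 0 * (x^T *m M *m x) 0 0.
Proof.
move=> pdM; apply: quad_disc; first exact: pd_form_ge0 _ _ _ pdM x.
move=> t; have := pd_form_ge0 _ _ _ pdM (a + t *: x).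
have sym : (x^T *m M *m a) 0 0 = (a^T *m M *m x) 0 0.
  have e : (x^T *m M *m a) 0 0 = ((x^T *m M *m a)^T) 0 0 by rewrite [RHS]mxE.
  by rewrite e !trmx_mul trmxK pdM.1 mulmxA.
rewrite [(a + t *: x)^T]linearD /= [(t *: x)^T]linearZ /= !mulmxDl !mulmxDr -!scalemxAl -!scalemxAr.
move: sym; move: (a^T *m M *m a) (a^T *m M *m x) (x^T *m M *m a) (x^T *m M *m x) => A B B' C sym.
rewrite !mxE sym.
move=> h; apply: le_trans h _; rewrite le_eqVlt; apply/orP; left; apply/eqP; ring.
Qed.

Lemma coord_bound n (M : 'M[R]_n) (x : 'cV[R]_n) k : pd_mx M ->
  (x k 0) ^+ 2 <= (invmx M) k k * (x^T *m M *m x) 0 0.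
Proof.
move=> pdM; have uM := pd_unit _ _ _ pdM.
have WT : (invmx M)^T = invmx M by rewrite trmx_inv pdM.1.
have := cs_form _ _ (invmx M *m delta_mx k 0) x pdM.
have -> : (invmx M *m delta_mx k 0)^T *m M *m x = row k x.
  by rewrite trmx_mul WT trmx_delta -!mulmxA (mulmxA (invmx M)) (mulVmx uM) mul1mx rowE.
have -> : (invmx M *m delta_mx k 0)^T *m M *m (invmx M *m delta_mx k 0)
    = col k (row k (invmx M)).
  rewrite trmx_mul WT trmx_delta -!mulmxA (mulmxA M) (mulmxV uM) mul1mx.
  by rewrite mulmxA -rowE -colE.
by rewrite !mxE.
Qed.

Lemma det_affine n (M : 'M[R]_n) a b (s : R) :
  \det (M + s *: delta_mx a b) = \det M + s * (\det (M + delta_mx a b) - \det M).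
Proof.
rewrite (@determinant_multilinear _ _ (M + s *: delta_mx a b) M (M + delta_mx a b) a (1 - s) s).
- ring.
- by apply/rowP => j; rewrite !mxE; ring.
- apply/matrixP => i j; rewrite !mxE eq_sym (negbTE (neq_lift _ _)) /=; ring.
- apply/matrixP => i j; rewrite !mxE eq_sym (negbTE (neq_lift _ _)) /=; ring.
Qed.

Lemma det_quad n (M : 'M[R]_n) u v (s : R) :
  \det (M + s *: (delta_mx u v + delta_mx v u)) =
  \det M + s * (\det (M + delta_mx u v) + \det (M + delta_mx v u) - 2 * \det M)
  + s ^+ 2 * (\det (M + delta_mx u v + delta_mx v u) - \det (M + delta_mx u v)
              - \det (M + delta_mx v u) + \det M).
Proof.
rewrite scalerDr addrA (addrAC M) det_affine.
have -> : M + s *: delta_mx v u + delta_mx u v = (M + delta_mx u v) + s *: delta_mx v u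
  by rewrite addrAC.
rewrite !det_affine; ring.
Qed.

End Gen.

Section Flip.
Variable R : realType.
Variables (p : nat) (G1 : {set 'I_p}).

Definition sgn (a : 'I_p) : R := if a \in G1 then 1 else -1.
Definition Jm : 'M[R]_p := diag_mx (\row_j sgn j).
Definition flip (M : 'M[R]_p) := Jm *m M *m Jm.

Lemma sgn2 a : sgn a * sgn a = 1.
Proof. by rewrite /sgn; case: (a \in G1); ring. Qed.

Lemma JmJm : Jm *m Jm = 1%:M.
Proof.
rewrite /Jm mulmx_diag -diag_const_mx; congr diag_mx.
by apply/rowP => j; rewrite !mxE sgn2.
Qed.

Lemma flipE M a b : flip M a b = sgn a * sgn b * M a b.
Proof. by rewrite /flip /Jm mul_diag_mx mul_mx_diag !mxE; ring. Qed.

Lemma det_flip M : \det (flip M) = \det M.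
Proof.
have h : \det Jm * \det Jm = 1 by rewrite -det_mulmx JmJm det1.
by rewrite /flip !det_mulmx mulrAC h mul1r.
Qed.

Lemma JmT : Jm^T = Jm.
Proof. exact: tr_diag_mx. Qed.

Lemma pd_flip M : pd_mx M -> pd_mx (flip M).
Proof.
move=> [MT pM]; split.
  by rewrite /flip !trmx_mul JmT MT mulmxA.
move=> x x0.
have Jx0 : Jm *m x != 0.
  apply: contraNneq x0 => e.
  by rewrite -[x]mul1mx -JmJm -mulmxA e mulmx0.
have := pM _ Jx0; rewrite trmx_mul JmT /flip !mulmxA.
done.
Qed.

Definition mid (M : 'M[R]_p) := 2^-1 *: (M + flip M).

Lemma midE M a b : mid M a b =
  if (a \in G1) == (b \in G1) then M a b else 0.
Proof.
rewrite /mid mxE mxE flipE /sgn.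
by case: (a \in G1); case: (b \in G1) => /=; field.
Qed.

Lemma flip_id (M : 'M[R]_p) : (forall a b, (a \in G1) != (b \in G1) -> M a b = 0) -> flip M = M.
Proof.
move=> h; apply/matrixP => a b; rewrite flipE /sgn.
case Ea: (a \in G1); case Eb: (b \in G1).
- by rewrite !mul1r.
- by rewrite h ?Ea ?Eb // mulr0.
- by rewrite h ?Ea ?Eb // mulr0.
- by rewrite mulrNN !mul1r.
Qed.

End Flip.

Section Aux.
Variable R : realType.

Lemma qdelta n (x : 'cV[R]_n) a b : (x^T *m delta_mx a b *m x) 0 0 = x a 0 * x b 0.
Proof.
rewrite -(mul_delta_mx (0 : 'I_1)) mulmxA -colE -mulmxA -rowE.
by rewrite mxE big_ord1 !mxE.
Qed.

Lemma tr_delta n (M : 'M[R]_n) a b : \tr (delta_mx a b *m M) = M b a.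
Proof.
rewrite -(mul_delta_mx (0 : 'I_1)) -mulmxA -rowE mxtrace_mulC -colE.
by rewrite /mxtrace big_ord1 !mxE.
Qed.

Lemma pd_diag_ge0 n (M : 'M[R]_n) k : pd_mx M -> 0 <= M k k.
Proof.
move=> pdM; have := pd_form_ge0 _ _ _ pdM (delta_mx k 0).
by rewrite trmx_delta -rowE -colE !mxE.
Qed.

Lemma lnbound (w : R) : `|w| <= 2^-1 -> - ln (1 + w) <= 2 * `|w|.
Proof.
move=> hw.
have y0 : 0 < 1 + w by move: hw; rewrite ler_norml => /andP [h1 _]; lra.
rewrite -lnV ?posrE //.
have h := @le_ln1Dx R ((1 + w)^-1 - 1).
have e : 1 + ((1 + w)^-1 - 1) = (1 + w)^-1 by ring.
rewrite e in h.
apply: le_trans (h _) _; first by have := invr_gt0 (1 + w); rewrite y0 => /= hh; lra.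
have -> : (1 + w)^-1 - 1 = - w / (1 + w) by field; rewrite gt_eqF.
rewrite ler_pdivrMr //.
case: (lerP 0 w) => w0.
  rewrite ger0_norm //; nra.
rewrite ltr0_norm //; move: hw; rewrite ltr0_norm // => hw; nra.
Qed.

Lemma term_le_sum (J : finType) (f : J -> R) j : (forall i, 0 <= f i) -> f j <= \sum_i f i.
Proof.
move=> h; rewrite (bigD1 j) //= lerDl; apply: sumr_ge0 => i _; exact: h.
Qed.

Lemma sum_two p (F : 'I_p -> 'I_p -> R) u v : u != v ->
  (forall a b, ~~ (((a == u) && (b == v)) || ((a == v) && (b == u))) -> F a b = 0) ->
  \sum_a \sum_(b | a != b) F a b = F u v + F v u.
Proof.
move=> uv h.
rewrite (bigD1 u) //= [X in _ + X](bigD1 v) /=; last by rewrite eq_sym.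
rewrite [\sum_(b | u != b) _](bigD1 v) //= big1 => [|b /andP [ub bv]]; last first.
  by apply: h; rewrite eqxx (negbTE bv) (negbTE uv).
rewrite [\sum_(b | v != b) _](bigD1 u) 1?eq_sym //= big1 => [|b /andP [vb bu]]; last first.
  by apply: h; rewrite eqxx (negbTE bu) eq_sym (negbTE uv).
rewrite big1 => [|a /andP [au av]]; last first.
  by apply: big1 => b _; apply: h; rewrite (negbTE au) (negbTE av).
by rewrite !addr0.
Qed.

End Aux.



Section Main.
Variable R : realType.
Variables (p : nat) (I : finType) (Sig : I -> 'M[R]_p) (lambda : R) (G1 : {set 'I_p}).

Let c : R := (Num.sqrt (#|I|%:R))^-1.
Definition Tr (Om : I -> 'M[R]_p) := \sum_i \tr (Om i *m Sig i).
Definition LD (Om : I -> 'M[R]_p) := \sum_i ln (\det (Om i)).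
Definition Pen (Om : I -> 'M[R]_p) :=
  \sum_(u < p) \sum_(v < p | u != v) Num.sqrt (\sum_i (Om i u v) ^+ 2).

Lemma objLE Om : objL Sig lambda Om = c * (Tr Om - LD Om) + lambda * Pen Om.
Proof. by rewrite /objL sumrB. Qed.

Definition Fab (Om : I -> 'M[R]_p) a b :=
  c * \sum_i Om i a b * Sig i b a +
  lambda * (if a != b then Num.sqrt (\sum_i (Om i a b) ^+ 2) else 0).

Lemma expandF Om : c * Tr Om + lambda * Pen Om = \sum_a \sum_b Fab Om a b.
Proof.
have -> : Tr Om = \sum_a \sum_b \sum_i Om i a b * Sig i b a.
  transitivity (\sum_i \sum_a \sum_b Om i a b * Sig i b a).
    by apply: eq_bigr => i _; rewrite /mxtrace; apply: eq_bigr => a _; rewrite mxE.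
  by rewrite exchange_big; apply: eq_bigr => a _; rewrite exchange_big.
rewrite /Pen mulr_sumr mulr_sumr -big_split /=; apply: eq_bigr => a _.
rewrite mulr_sumr (big_mkcond (fun b => a != b)) mulr_sumr -big_split /=.
apply: eq_bigr => b _; rewrite /Fab mulr_sumr.
by case: (a != b); rewrite ?mulr0.
Qed.
Lemma c_pos : (0 < #|I|)%N -> 0 < c.
Proof. by move=> h; rewrite /c invr_gt0 sqrtr_gt0 ltr0n. Qed.

Lemma c_bound (X : R) : (0 < #|I|)%N -> 0 < lambda -> 0 <= X ->
  #|I|%:R^-1 * X <= lambda ^+ 2 -> c * Num.sqrt X <= lambda.
Proof.
move=> n0 l0 X0 h.
rewrite /c -sqrtrV ?ler0n // -sqrtrM ?invr_ge0 ?ler0n //.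
by rewrite -(ger0_norm (ltW l0)) -sqrtr_sqr ler_wsqrtr.
Qed.

Local Notation midG := (@mid R p G1).
Local Notation flipG := (@flip R p G1).

Lemma F_mid_le (Om : I -> 'M[R]_p) a b :
  (forall i, (Sig i)^T = Sig i) -> (0 < #|I|)%N -> 0 < lambda ->
  (forall a b, a \in G1 -> b \notin G1 ->
     #|I|%:R^-1 * \sum_i (Sig i a b) ^+ 2 <= lambda ^+ 2) ->
  Fab (fun i => midG (Om i)) a b <= Fab Om a b.
Proof.
move=> sym n0 l0 H.
have [e|ne] := eqVneq (a \in G1) (b \in G1).
  have hm i : midG (Om i) a b = Om i a b by rewrite midE e eqxx.
  rewrite le_eqVlt; apply/orP; left; apply/eqP.
  rewrite /Fab; congr (_ * _ + _ * _).
    by apply: eq_bigr => i _; rewrite hm.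
  by case: (a != b) => //; congr (Num.sqrt _); apply: eq_bigr => i _; rewrite hm.
have hm i : midG (Om i) a b = 0 by rewrite midE (negbTE ne).
have ab : a != b by apply: contraNneq ne => ->.
have -> : Fab (fun i => midG (Om i)) a b = 0.
  rewrite /Fab ab big1 => [|i _]; last by rewrite hm mul0r.
  rewrite big1 => [|i _]; last by rewrite hm expr0n.
  by rewrite sqrtr0 !mulr0 addr0.
rewrite /Fab ab.
set S := \sum_i _; set X := \sum_i _.
set Y := \sum_i (Sig i b a) ^+ 2.
have h1 := cs_sum_abs _ _ (fun i => Om i a b) (fun i => Sig i b a).
rewrite -/S -/X -/Y in h1.
move: h1; rewrite ler_norml => /andP [h1 _].
have Y0 : 0 <= Y by apply: sumr_ge0 => i _; apply: sqr_ge0.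
have h2 : c * Num.sqrt Y <= lambda.
  apply: c_bound => //.
  case Ea : (a \in G1).
    have Eb : b \notin G1 by move: ne; rewrite Ea; case: (b \in G1).
    have := H a b Ea Eb.
    suff -> : Y = \sum_i (Sig i a b) ^+ 2 by [].
    apply: eq_bigr => i _; rewrite -[in LHS]sym mxE //.
  have Eb : b \in G1 by move: ne; rewrite Ea; case: (b \in G1).
  by apply: H => //; rewrite Ea.
have c0 := c_pos n0.
have sX := sqrtr_ge0 X; have sY := sqrtr_ge0 Y.
nra.
Qed.

Lemma pd_avg (A B : 'M[R]_p) : pd_mx A -> pd_mx B -> pd_mx (2^-1 *: (A + B)).
Proof.
move=> [AT pA] [BT pB]; split.
  by rewrite linearZ /= linearD /= AT BT.
move=> x x0; rewrite -scalemxAr -scalemxAl mulmxDr mulmxDl.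
have := pA x x0; have := pB x x0.
move: (x^T *m A *m x) (x^T *m B *m x) => a b hb ha.
rewrite !mxE; apply: mulr_gt0; [by rewrite invr_gt0 ltr0n | lra].
Qed.

Lemma dirB (Om : I -> 'M[R]_p) :
  (forall i, pd_mx (Om i)) ->
  (forall i, (Sig i)^T = Sig i) -> (0 < #|I|)%N -> 0 < lambda ->
  (forall a b, a \in G1 -> b \notin G1 ->
     #|I|%:R^-1 * \sum_i (Sig i a b) ^+ 2 <= lambda ^+ 2) ->
  forall i0 u0 v0, u0 \in G1 -> v0 \notin G1 -> Om i0 u0 v0 != 0 ->
  objL Sig lambda (fun i => midG (Om i)) < objL Sig lambda Om.
Proof.
move=> pdO sym n0 l0 H i0 u0 v0 u0G v0G nz.
have hd i : \det (Om i) <= \det (midG (Om i)) /\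
    (\det (Om i) = \det (midG (Om i)) -> Om i = flipG (Om i)).
  exact: (det_mid _ _ _ _ (pdO i) (pd_flip _ _ G1 _ (pdO i)) (esym (det_flip _ _ G1 _))).
have dpos i : 0 < \det (Om i) by apply: det_pd_pos.
have hl i : ln (\det (Om i)) <= ln (\det (midG (Om i))).
  have [h _] := hd i.
  by rewrite ler_ln ?posrE // (lt_le_trans (dpos i) h).
have hl0 : ln (\det (Om i0)) < ln (\det (midG (Om i0))).
  have [h1 h2] := hd i0.
  have hlt : \det (Om i0) < \det (midG (Om i0)).
    rewrite lt_def h1 andbT; apply/eqP => e.
    have := congr1 (fun M : 'M[R]_p => M u0 v0) (h2 (esym e)); rewrite /= flipE /sgn u0G (negbTE v0G).
    rewrite mul1r mulN1r => e2.
    have e3 : Om i0 u0 v0 = 0 by lra.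
    by move: nz; rewrite e3 eqxx.
  by rewrite ltr_ln ?posrE // (lt_trans (dpos i0) hlt).
have LDlt : LD Om < LD (fun i => midG (Om i)).
  rewrite /LD (bigD1 i0) //= [X in _ < X](bigD1 i0) //=.
  have : \sum_(i | i != i0) ln (\det (Om i)) <= \sum_(i | i != i0) ln (\det (midG (Om i))).
    by apply: ler_sum => i _; apply: hl.
  lra.
have key : c * Tr (fun i => midG (Om i)) + lambda * Pen (fun i => midG (Om i))
    <= c * Tr Om + lambda * Pen Om.
  rewrite !expandF; apply: ler_sum => a _; apply: ler_sum => b _.
  exact: F_mid_le.
have c0 := c_pos n0.
have cl : c * LD Om < c * LD (fun i => midG (Om i)) by rewrite ltr_pM2l.
rewrite !objLE !mulrBr; lra.
Qed.

Definition Emx (u v : 'I_p) : 'M[R]_p := delta_mx u v + delta_mx v u.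

Lemma EmxE u v a b : Emx u v a b = ((a == u) && (b == v))%:R + ((a == v) && (b == u))%:R.
Proof. by rewrite !mxE. Qed.

Lemma flip_E (M : 'M[R]_p) u v s :
  (forall a b, (a \in G1) != (b \in G1) -> M a b = 0) -> u \in G1 -> v \notin G1 ->
  flipG (M + s *: Emx u v) = M + (- s) *: Emx u v.
Proof.
move=> bd uG vG.
have nv x : x \in G1 -> (x == v) = false.
  by move=> hx; apply/eqP => e; move: vG; rewrite -e hx.
have nu x : x \notin G1 -> (x == u) = false.
  by move=> hx; apply/eqP => e; move: hx; rewrite e uG.
apply/matrixP => a b; rewrite flipE mxE [in RHS]mxE mxE [in RHS]mxE !EmxE /sgn.
case Ea: (a \in G1); case Eb: (b \in G1).
- by rewrite (nv a Ea) (nv b Eb) /= !andbF /= !mulr0n; ring.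
- by rewrite bd ?Ea ?Eb //; ring.
- by rewrite bd ?Ea ?Eb //; ring.
- by rewrite (nu a (negbT Ea)) (nu b (negbT Eb)) /= !andbF /= !mulr0n; ring.
Qed.

Lemma det_E (M : 'M[R]_p) u v :
  (forall a b, (a \in G1) != (b \in G1) -> M a b = 0) -> u \in G1 -> v \notin G1 ->
  exists be, forall s, \det (M + s *: Emx u v) = \det M + s ^+ 2 * be.
Proof.
move=> bd uG vG.
have [al [be hq]] : exists al be, forall s,
    \det (M + s *: Emx u v) = \det M + s * al + s ^+ 2 * be.
  by eexists; eexists => s; exact: det_quad.
have e : \det (M + 1 *: Emx u v) = \det (M + (-1) *: Emx u v).
  by rewrite -(det_flip _ _ G1) flip_E.
rewrite !hq expr1n sqrrN expr1n mul1r mulN1r in e.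
have al0 : al = 0 by lra.
by exists be => s; rewrite hq al0 mulr0 addr0.
Qed.

Lemma pd_E (M : 'M[R]_p) u v tau : pd_mx M ->
  `|tau| * (invmx M u u + invmx M v v) < 1 -> pd_mx (M + tau *: Emx u v).
Proof.
move=> pdM ht; split.
  by rewrite [(M + _)^T]linearD /= [(tau *: _)^T]linearZ /= (proj1 pdM) /Emx [(delta_mx u v + _)^T]linearD /= !trmx_delta [delta_mx v u + _]addrC.
move=> x x0.
have q0 := pdM.2 x x0.
have hu := coord_bound _ _ _ x u pdM; have hv := coord_bound _ _ _ x v pdM.
have Wu := pd_diag_ge0 _ _ _ u (pd_inv _ _ _ pdM).
have Wv := pd_diag_ge0 _ _ _ v (pd_inv _ _ _ pdM).
rewrite mulmxDr mulmxDl -scalemxAr -scalemxAl mulmxDr mulmxDl.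
rewrite mxE [X in _ + X]mxE [X in tau * X]mxE !qdelta.
move: q0 hu hv; move: ((x^T *m M *m x) 0 0) (x u 0) (x v 0) => q xu xv q0 hu hv.
move: ht hu hv Wu Wv; move: (invmx M u u) (invmx M v v) => Wuu Wvv ht hq hq' Wu Wv.
have h2 : - (`|tau| * (xu ^+ 2 + xv ^+ 2)) <= tau * (xu * xv + xv * xu).
  case: (lerP 0 tau) => t0.
    rewrite ger0_norm //; have := mulr_ge0 t0 (sqr_ge0 (xu + xv)); nra.
  rewrite ltr0_norm //; have : 0 <= - tau by lra.
  move=> nt; have := mulr_ge0 nt (sqr_ge0 (xu - xv)); nra.
have h3 : `|tau| * (xu ^+ 2 + xv ^+ 2) <= `|tau| * (Wuu * q + Wvv * q).
  by apply: ler_wpM2l => //; lra.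
have h4 : `|tau| * (Wuu * q + Wvv * q) < q.
  rewrite -mulrDl mulrA; rewrite -[X in _ < X]mul1r ltr_pM2r //.
lra.
Qed.

Lemma tr_E (M Sg : 'M[R]_p) u v tau :
  \tr ((M + tau *: Emx u v) *m Sg) = \tr (M *m Sg) + tau * (Sg v u + Sg u v).
Proof.
by rewrite mulmxDl mxtraceD -scalemxAl mxtraceZ mulmxDl mxtraceD !tr_delta.
Qed.

Lemma dirA (Om : I -> 'M[R]_p) u v :
  (forall i, pd_mx (Om i)) ->
  (forall i, (Sig i)^T = Sig i) -> (0 < #|I|)%N -> 0 < lambda ->
  (forall i a b, (a \in G1) != (b \in G1) -> Om i a b = 0) ->
  u \in G1 -> v \notin G1 ->
  lambda ^+ 2 < #|I|%:R^-1 * \sum_i (Sig i u v) ^+ 2 ->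
  exists Om2 : I -> 'M[R]_p,
    (forall i, pd_mx (Om2 i)) /\ objL Sig lambda Om2 < objL Sig lambda Om.
Proof.
move=> pdO sym n0 l0 bd uG vG hS.
have uv : u != v by apply: contraNneq vG => e; rewrite -e.
set sg := fun i => Sig i u v.
set S := \sum_i sg i ^+ 2.
have c0 := c_pos n0.
have S0 : 0 < S.
  have : 0 < #|I|%:R^-1 * S by apply: lt_trans hS; rewrite exprn_gt0.
  by rewrite pmulr_rgt0 // invr_gt0 ltr0n.
have sS := sqrtr_ge0 S.
have sS0 : 0 < Num.sqrt S by rewrite sqrtr_gt0.
have cS : lambda < c * Num.sqrt S.
  rewrite /c -sqrtrV ?ler0n // -sqrtrM ?invr_ge0 ?ler0n //.
  rewrite -[lambda]ger0_norm ?ltW // -sqrtr_sqr ltr_sqrt //.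
  by apply: lt_trans hS; rewrite exprn_gt0.
set De := c * S - lambda * Num.sqrt S.
have De0 : 0 < De.
  have eS : S = Num.sqrt S * Num.sqrt S by rewrite -expr2 sqr_sqrtr // ltW.
  rewrite /De [X in c * X]eS; nra.
have hbe i : exists be, forall s, \det (Om i + s *: Emx u v) = \det (Om i) + s ^+ 2 * be.
  by apply: det_E => // a b; apply: bd.
pose be i := projT1 (cid (hbe i)).
have hq i s : \det (Om i + s *: Emx u v) = \det (Om i) + s ^+ 2 * be i.
  by rewrite /be; case: (cid (hbe i)) => b hb /=.
have d0 i : 0 < \det (Om i) by apply: det_pd_pos.
pose k i := sg i ^+ 2 * be i / \det (Om i).
pose K := \sum_i `|k i|.
pose P := \sum_i `|sg i| * (invmx (Om i) u u + invmx (Om i) v v).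
have Wge i : 0 <= invmx (Om i) u u + invmx (Om i) v v.
  by apply: addr_ge0; apply: pd_diag_ge0; apply: pd_inv.
have P0 : 0 <= P by apply: sumr_ge0 => i _; apply: mulr_ge0.
have K0 : 0 <= K by apply: sumr_ge0 => i _.
set D := 1 + P + K + c * K.
have D1 : 1 <= D by rewrite /D; have := mulr_ge0 (ltW c0) K0; lra.
have D0 : 0 < D by lra.
set m := De / (2 * (1 + De)).
have m0 : 0 < m by rewrite /m divr_gt0 //; lra.
have mh : m < 2^-1.
  rewrite /m ltr_pdivrMr; last by lra.
  have -> : 2^-1 * (2 * (1 + De)) = 1 + De by field.
  lra.
have mDe : m < De.
  rewrite /m ltr_pdivrMr; last by lra.
  nra.
set t := m / D.
have t0 : 0 < t by rewrite /t divr_gt0.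
have tD : t * D = m by rewrite /t mulfVK // gt_eqF.
have tX X : 0 <= X -> X <= D -> t * X <= m.
  by move=> _ XD; rewrite -tD ler_pM2l.
have tm : t <= m by rewrite -[t]mulr1 tX //; lra.
have tP : t * P <= m by apply: tX => //; rewrite /D; have := mulr_ge0 (ltW c0) K0; lra.
have tK : t * K <= m by apply: tX => //; rewrite /D; have := mulr_ge0 (ltW c0) K0; lra.
have tcK : t * (c * K) <= m by apply: tX; [exact: mulr_ge0 (ltW c0) K0 | rewrite /D; lra].
pose Om2 i := Om i + (- (t * sg i)) *: Emx u v.
have pd2 i : pd_mx (Om2 i).
  apply: pd_E => //.
  rewrite normrN normrM (ger0_norm (ltW t0)) -mulrA.
  have : `|sg i| * (invmx (Om i) u u + invmx (Om i) v v) <= P.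
    by apply: (term_le_sum _ _ (fun i => `|sg i| * _)) => j; apply: mulr_ge0.
  move=> hPi; have : t * (`|sg i| * (invmx (Om i) u u + invmx (Om i) v v)) <= t * P
    by rewrite ler_pM2l.
  lra.
exists Om2; split => //.
have Tr2 : Tr Om2 = Tr Om - 2 * t * S.
  rewrite /Tr /S mulr_sumr -sumrB; apply: eq_bigr => i _.
  rewrite /Om2 tr_E /sg -[in Sig i v u](sym i) mxE; ring.
have O2E i a b : Om2 i a b = Om i a b - t * sg i *
    (((a == u) && (b == v))%:R + ((a == v) && (b == u))%:R).
  by rewrite /Om2 !mxE; ring.
have sqS : Num.sqrt (\sum_i (- (t * sg i)) ^+ 2) = t * Num.sqrt S.
  under eq_bigr do rewrite sqrrN exprMn.
  by rewrite -mulr_sumr sqrtrM ?sqr_ge0 // sqrtr_sqr ger0_norm // ltW.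
have Pen2 : Pen Om2 - Pen Om = 2 * t * Num.sqrt S.
  rewrite /Pen -sumrB; under eq_bigr do rewrite -sumrB.
  rewrite (sum_two _ _ (fun a b => Num.sqrt (\sum_i (Om2 i a b) ^+ 2)
                                   - Num.sqrt (\sum_i (Om i a b) ^+ 2)) u v uv).
    have Ouv i : Om i u v = 0 by apply: bd; rewrite uG (negbTE vG).
    have Ovu i : Om i v u = 0 by apply: bd; rewrite uG (negbTE vG).
    have e1 i : Om2 i u v = - (t * sg i).
      by rewrite O2E Ouv !eqxx (negbTE uv) /=; ring.
    have e2 i : Om2 i v u = - (t * sg i).
      by rewrite O2E Ovu !eqxx eq_sym (negbTE uv) /=; ring.
    rewrite (eq_bigr _ (fun i _ => congr1 (fun x => x ^+ 2) (e1 i))).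
    rewrite (eq_bigr _ (fun i _ => congr1 (fun x => x ^+ 2) (e2 i))).
    rewrite sqS !big1 ?sqrtr0 => [|i _|i _]; last 2 first.
    - by rewrite Ovu expr0n.
    - by rewrite Ouv expr0n.
    ring.
  move=> a b /norP [h1 h2].
  under eq_bigr do rewrite O2E (negbTE h1) (negbTE h2) /= addr0 mulr0 subr0.
  by rewrite subrr.
have LDb : LD Om - LD Om2 <= 2 * t ^+ 2 * K.
  rewrite /LD -sumrB /K mulr_sumr; apply: ler_sum => i _.
  set w := t ^+ 2 * k i.
  have kK : `|k i| <= K by apply: (term_le_sum _ _ (fun i => `|k i|)).
  have hw : `|w| <= 2^-1.
    rewrite /w normrM ger0_norm ?sqr_ge0 //.
    have h1 : t ^+ 2 * `|k i| <= t ^+ 2 * K by rewrite ler_wpM2l ?sqr_ge0.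
    have h2 : t ^+ 2 * K = t * (t * K) by rewrite expr2 mulrA.
    have h3 : t * (t * K) <= t * m by rewrite ler_pM2l.
    have h4 : t * m <= m * m by rewrite ler_pM2r.
    nra.
  have w1 : 0 < 1 + w by move: hw; rewrite ler_norml => /andP [hh _]; lra.
  have eD : \det (Om2 i) = \det (Om i) * (1 + w).
    rewrite /Om2 hq /w /k; field; exact: lt0r_neq0.
  rewrite eD lnM ?posrE //.
  have := lnbound _ _ hw; rewrite /w normrM ger0_norm ?sqr_ge0 //.
  move=> hh; rewrite opprD addrA subrr add0r; apply: le_trans hh _.
  by rewrite mulrA.
rewrite !objLE Tr2.
have -> : Pen Om2 = Pen Om + 2 * t * Num.sqrt S by rewrite -Pen2; ring.
have key : c * (LD Om - LD Om2) <= c * (2 * t ^+ 2 * K) by rewrite ler_pM2l.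
have e : c * (2 * t ^+ 2 * K) - c * (2 * t * S) + lambda * (2 * t * Num.sqrt S)
    = 2 * t * (c * t * K - De) by rewrite /De; ring.
have neg : 2 * t * (c * t * K - De) < 0.
  have : c * t * K = t * (c * K) by ring.
  move=> hh; have h : c * t * K - De < 0 by lra.
  nra.
rewrite -subr_lt0.
have -> : c * (Tr Om - 2 * t * S - LD Om2) + lambda * (Pen Om + 2 * t * Num.sqrt S) -
    (c * (Tr Om - LD Om) + lambda * Pen Om) =
    c * (LD Om - LD Om2) - c * (2 * t * S) + lambda * (2 * t * Num.sqrt S) by ring.
lra.
Qed.

End Main.



Theorem theorem2 (R : realType) (p : nat) (I : finType)
    (Sig : I -> 'M[R]_p) (lambda : R) (Omhat : I -> 'M[R]_p)
    (G1 G2 : {set 'I_p}) :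
  (2 <= p)%N ->
  (0 < #|I|)%N ->
  (forall i, psd_mx (Sig i)) ->
  0 < lambda ->
  is_minimizer Sig lambda Omhat ->
  G1 != finset.set0 -> G2 != finset.set0 ->
  G1 :&: G2 = finset.set0 -> G1 :|: G2 = [set: 'I_p] ->
  (forall u v i, u \in G1 -> v \in G2 -> Omhat i u v = 0) <->
  (forall u v, u \in G1 -> v \in G2 ->
     (#|I|%:R)^-1 * \sum_(i : I) (Sig i u v) ^+ 2 <= lambda ^+ 2).
Proof.
move=> p2 n0 psdS l0 [pdO minO] G1n G2n disj uni.
have sym i : (Sig i)^T = Sig i := (psdS i).1.
have G2E a : (a \in G2) = (a \notin G1).
  apply/idP/idP => h.
    apply/negP => h1; have : a \in G1 :&: G2 by rewrite inE h1 h.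
    by rewrite disj inE.
  have : a \in G1 :|: G2 by rewrite uni inE.
  by rewrite inE (negbTE h).
split.
- move=> hz u v uG vG; rewrite leNgt; apply/negP => hS.
  have bd i a b : (a \in G1) != (b \in G1) -> Omhat i a b = 0.
    case Ea : (a \in G1); case Eb : (b \in G1) => //= _.
      by apply: hz; rewrite // G2E Eb.
    have -> : Omhat i a b = Omhat i b a by rewrite -[in LHS](pdO i).1 mxE.
    by apply: hz; rewrite // G2E Ea.
  have vG' : v \notin G1 by rewrite -G2E.
  have [Om2 [pd2 lt]] := dirA R p I Sig lambda G1 Omhat u v pdO sym n0 l0 bd uG vG' hS.
  have := minO Om2 pd2; rewrite leNgt lt //.
- move=> H u v i uG vG; apply/eqP; apply: contraT => nz.
  have H' a b : a \in G1 -> b \notin G1 ->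
      #|I|%:R^-1 * \sum_i (Sig i a b) ^+ 2 <= lambda ^+ 2.
    by move=> aG bG; apply: H; rewrite // G2E.
  have vG' : v \notin G1 by rewrite -G2E.
  have lt := dirB R p I Sig lambda G1 Omhat pdO sym n0 l0 H' i u v uG vG' nz.
  have pdm j : pd_mx (mid R p G1 (Omhat j)).
    by apply: pd_avg => //; apply: pd_flip.
  by have := minO _ pdm; rewrite leNgt lt.
Qed.
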